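(* Let $n\ge3$, let $p:[\mathcal Q:\xi]\to[\mathcal H:\partial]$ be a trivial fibration and $f:[\mathcal Q:\xi]\to[\mathcal G:\delta]$ a morphism of reduced $n$-crossed complexes, $\nabla^f=(p,f)$, and $P=\mathcal Q_{n-1}\times^{\mathcal Q_n}(\mathcal H_n\times\mathcal G_n)$ the degree $n-1$ group of $\mathcal Q^{\nabla^f_n}$. Define $i:\mathcal G_n\to P$ by $i(c)=[1,(1,c)]$ and $u:P\to\ker\xi_{n-2}\times_{\ker\partial_{n-2}}\mathcal H_{n-1}$ by $u([a,(b,c)])=(\xi_{n-1}(a),\,p_{n-1}(a)\partial_n(b))$. Then the sequence $$1\to\mathcal G_n\xrightarrow{i}P\xrightarrow{u}\ker\xi_{n-2}\times_{\ker\partial_{n-2}}\mathcal H_{n-1}\to1$$ is exact, and for every $k\le n-2$ the map $u_k:\mathcal Q_k\to\ker\xi_{k-1}\times_{\ker\partial_{k-1}}\mathcal H_k$, $x\mapsto(\xi_k(x),p_k(x))$, is surjective.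
   Context: A reduced $n$-crossed complex $[C:\partial]$ is a sequence of groups and homomorphisms $C_n\xrightarrow{\partial_n}C_{n-1}\to\cdots\to C_2\xrightarrow{\partial_2}C_1$ with an action of $C_1$ on each $C_k$ ($k\ge2$), such that $\partial_2$ is a crossed module, $C_k$ is abelian for $k\ge3$, each $\partial_k$ is $C_1$-equivariant, $\partial_{k-1}\partial_k$ is trivial, and $\partial_2(C_2)$ acts trivially on $C_k$ for $k\ge3$; morphisms are families of homomorphisms commuting with differentials and actions; products are degreewise. Homotopy groups: $\pi_1(C)=C_1/\partial_2(C_2)$, $\pi_k(C)=\ker\partial_k/\operatorname{im}\partial_{k+1}$ ($2\le k\le n-1$), $\pi_n(C)=\ker\partial_n$. Weak equivalence: isomorphism on all $\pi_k$; fibration: surjective in each degree; trivial fibration: both. For $p:[\mathcal Q:\xi]\to[\mathcal H:\partial]$, $\ker\xi_{k-1}\times_{\ker\partial_{k-1}}\mathcal H_k$ denotes the fibre product of $p_{k-1}:\ker\xi_{k-1}\to\ker\partial_{k-1}$ and $\partial_k:\mathcal H_k\to\ker\partial_{k-1}$, with conventions $\ker\xi_0=\ker\partial_0=1$, $\ker\xi_1=\mathcal Q_1$, $\ker\partial_1=\mathcal H_1$. The $n$-pushout $\mathcal Q^{\nabla_n}$ of $\nabla=(p,f):\mathcal Q\to\mathcal K=\mathcal H\times\mathcal G$: equal to $\mathcal Q$ in degrees $\le n-2$, degree $n$ group $\mathcal K_n$, degree $n-1$ group $P$, the quotient of the (semi)direct product $\mathcal Q_{n-1}\ltimes\mathcal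 K_n$ (for $n=3$, $\mathcal Q_2$ acts on $\mathcal K_3$ via $\nabla_1\circ\xi_2$; for $n\ge4$ direct) by the normal subgroup of elements $(\xi_n(x)^{-1},\nabla_n(x))$, $x\in\mathcal Q_n$, with elements written $[a,(b,c)]$; differentials $(b,c)\mapsto[1,(b,c)]$ and $[a,(b,c)]\mapsto\xi_{n-1}(a)$. *)

(* Defs.v *)
From Stdlib Require Import Arith.

Set Implicit Arguments.

Record Grp := {
  gcar :> Type;
  gmul : gcar -> gcar -> gcar;
  gone : gcar;
  ginv : gcar -> gcar;
  gassoc : forall x y z, gmul x (gmul y z) = gmul (gmul x y) z;
  gone_l : forall x, gmul gone x = x;
  ginv_l : forall x, gmul (ginv x) x = gone }.
Arguments gmul {g}.
Arguments gone {g}.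
Arguments ginv {g}.

Definition ishom (A B : Grp) (h : A -> B) : Prop :=
  forall x y, h (gmul x y) = gmul (h x) (h y).

(* ---------- Reduced n-crossed complexes ----------
   cc k = C_k (meaningful for 1 <= k <= n); cc 0 is forced trivial
   (degree 0 is not part of the data); dd k = partial_k : C_k -> C_{k-1};
   act k g x = x^g, the RIGHT action of g in C_1 on x in C_k (k >= 2). *)
Record ncc (n : nat) := {
  cc : nat -> Grp;
  dd : forall k, cc k -> cc (pred k);
  act : forall k, cc 1 -> cc k -> cc k;
  cc0_triv : forall x : cc 0, x = gone;
  dd_hom : forall k, 2 <= k <= n -> @ishom (cc k) (cc (pred k)) (dd k);
  act_hom : forall k g, 2 <= k <= n -> @ishom (cc k) (cc k) (act k g);
  act_one : forall k x, 2 <= k <= n -> act k gone x = x;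
  act_mul : forall k g h x, 2 <= k <= n -> act k (gmul g h) x = act k h (act k g x);
  cm_equiv : forall g x, 2 <= n -> dd 2 (act 2 g x) = gmul (ginv g) (gmul (dd 2 x) g);
  cm_peiffer : forall x y, 2 <= n -> act 2 (dd 2 y) x = gmul (ginv y) (gmul x y);
  ab : forall k (x y : cc k), 3 <= k <= n -> gmul x y = gmul y x;
  dd_equiv : forall k g x, 3 <= k <= n -> dd k (act k g x) = act (pred k) g (dd k x);
  dd_dd : forall k x, 3 <= k <= n -> dd (pred k) (dd k x) = gone;
  act_triv : forall k y x, 3 <= k <= n -> act k (dd 2 y) x = x }.
Arguments cc {n}.
Arguments dd {n} _ _ _.
Arguments act {n} _ _ _ _.

Record nmor (n : nat) (X Y : ncc n) := {
  mm : forall k, cc X k -> cc Y k;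
  mm_hom : forall k, 1 <= k <= n -> @ishom (cc X k) (cc Y k) (mm k);
  mm_dd : forall k x, 2 <= k <= n -> mm (pred k) (dd X k x) = dd Y k (mm k x);
  mm_act : forall k g x, 2 <= k <= n -> mm k (act X k g x) = act Y k (mm 1 g) (mm k x) }.
Arguments mm {n X Y} _ _ _.

(* ---------- Homotopy groups, weak equivalences, fibrations ----------
   pi_k = Z_k / B_k with Z_1 = C_1, Z_k = ker partial_k (k >= 2),
   B_k = im partial_{k+1} (k < n), B_n = 1. *)
Definition cyc n (X : ncc n) k (x : cc X k) : Prop :=
  k = 1 \/ dd X k x = gone.
Definition bnd n (X : ncc n) k (x : cc X k) : Prop :=
  (k < n /\ exists z : cc X (S k), dd X (S k) z = x) \/ (n <= k /\ x = gone).

(* the induced map Z_k/B_k -> Z'_k/B'_k is bijective, for all 1 <= k <= n *)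
Definition weq n (X Y : ncc n) (h : nmor X Y) : Prop :=
  forall k, 1 <= k <= n ->
    (forall y : cc Y k, cyc Y k y ->
       exists x : cc X k, cyc X k x /\ bnd Y k (gmul (ginv (mm h k x)) y)) /\
    (forall x x' : cc X k, cyc X k x -> cyc X k x' ->
       bnd Y k (gmul (ginv (mm h k x)) (mm h k x')) -> bnd X k (gmul (ginv x) x')).

Definition fibration n (X Y : ncc n) (h : nmor X Y) : Prop :=
  forall k, 1 <= k <= n -> forall y : cc Y k, exists x, mm h k x = y.

Definition trivfib n (X Y : ncc n) (h : nmor X Y) : Prop :=
  fibration h /\ weq h.

Section Pushout.
Variables (n : nat) (Q H G : ncc n) (p : nmor Q H) (f : nmor Q G).

Definition deg1 (j : nat) : cc Q j -> option (cc Q 1) :=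
  match j as j0 return cc Q j0 -> option (cc Q 1) with
  | 1 => fun y => Some y
  | _ => fun _ => None
  end.

Definition Pelt : Type := (cc Q (pred n) * (cc H n * cc G n))%type.

(* action of a in Q_{n-1} on K_n = H_n x G_n: via nabla_1 o xi_2 when n = 3,
   trivial when n >= 4 (direct product) *)
Definition Kact (a : cc Q (pred n)) (k : cc H n * cc G n) : cc H n * cc G n :=
  match deg1 (pred (pred n)) (dd Q (pred n) a) with
  | Some g => (act H n (mm p 1 g) (fst k), act G n (mm f 1 g) (snd k))
  | None => k
  end.

Definition Pmul (z z' : Pelt) : Pelt :=
  (gmul (fst z) (fst z'),
   (gmul (fst (Kact (fst z') (snd z))) (fst (snd z')),
    gmul (snd (Kact (fst z') (snd z))) (snd (snd z')))).

(* generator (xi_n(x)^{-1}, nabla_n(x)) of the normal subgroup *)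
Definition Nelt (x : cc Q n) : Pelt := (ginv (dd Q n x), (mm p n x, mm f n x)).

(* equality in the quotient P: [z] = [z'] iff z' in z N *)
Definition Prel (z z' : Pelt) : Prop := exists x : cc Q n, z' = Pmul z (Nelt x).

Definition iP (c : cc G n) : Pelt := (gone, (gone, c)).

Definition uP (z : Pelt) : cc Q (pred (pred n)) * cc H (pred n) :=
  (dd Q (pred n) (fst z), gmul (mm p (pred n) (fst z)) (dd H n (fst (snd z)))).

End Pushout.

(* ker xi_{k-1} x_{ker partial_{k-1}} H_k, with ker xi_0 = 1 (Q_0 trivial),
   ker xi_1 = Q_1 *)
Definition fibprod n (Q H : ncc n) (p : nmor Q H) k (q : cc Q (pred k)) (h : cc H k) : Prop :=
  (pred k <= 1 \/ dd Q (pred k) q = gone) /\ mm p (pred k) q = dd H k h.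

(* Main.v *)
Require Import Defs.
From Stdlib Require Import Arith Lia.

Set Implicit Arguments.
Arguments Kact : simpl never.

Section GrpL.
Context {G : Grp}.
Lemma mulV (x : G) : gmul x (ginv x) = gone.
Proof.
  transitivity (gmul (gmul (ginv (ginv x)) (ginv x)) (gmul x (ginv x))).
  - rewrite ginv_l, gone_l; reflexivity.
  - rewrite <- gassoc, (gassoc _ (ginv x) x), ginv_l, gone_l, ginv_l; reflexivity.
Qed.
Lemma mul1 (x : G) : gmul x gone = x.
Proof. rewrite <- (ginv_l _ x), gassoc, mulV, gone_l; reflexivity. Qed.
Lemma mulKV (x y : G) : gmul x (gmul (ginv x) y) = y.
Proof. rewrite gassoc, mulV, gone_l; reflexivity. Qed.
Lemma mulVK (x y : G) : gmul (ginv x) (gmul x y) = y.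
Proof. rewrite gassoc, ginv_l, gone_l; reflexivity. Qed.
Lemma cancel_l (a x y : G) : gmul a x = gmul a y -> x = y.
Proof. intro E. rewrite <- (mulVK a x), E, mulVK; reflexivity. Qed.
Lemma inv_uniq (x y : G) : gmul x y = gone -> y = ginv x.
Proof. intro E. rewrite <- (mulVK x y), E, mul1; reflexivity. Qed.
Lemma inv_uniq_l (x y : G) : gmul x y = gone -> x = ginv y.
Proof. intro E. rewrite <- (mul1 x), <- (mulV y), gassoc, E, gone_l; reflexivity. Qed.
Lemma inv_one : ginv (@gone G) = gone.
Proof. symmetry; apply inv_uniq; apply gone_l. Qed.
Lemma inv_inv (x : G) : ginv (ginv x) = x.
Proof. symmetry; apply inv_uniq; apply ginv_l. Qed.
End GrpL.

Lemma hom_mul (A B : Grp) (h : A -> B) : @ishom A B h -> forall x y, h (gmul x y) = gmul (h x) (h y).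
Proof. intros Hh; exact Hh. Qed.
Lemma hom_one (A B : Grp) (h : A -> B) : @ishom A B h -> h gone = gone.
Proof. intro Hh. apply (cancel_l (h gone)). rewrite <- Hh, gone_l, mul1; reflexivity. Qed.
Lemma hom_inv (A B : Grp) (h : A -> B) : @ishom A B h -> forall x, h (ginv x) = ginv (h x).
Proof. intros Hh x. apply inv_uniq. rewrite <- Hh, mulV. apply (hom_one Hh). Qed.

Lemma cyc_one n (X : ncc n) k : 1 <= k <= n -> cyc X k gone.
Proof.
  intro Hk. destruct k as [|[|k]]; [lia| left; reflexivity |].
  right. apply (hom_one (dd_hom X (k:=(S (S k))) ltac:(lia))).
Qed.

Lemma lift n (Q H : ncc n) (p : nmor Q H) (Hfib : fibration p) (Hweq : weq p)
  k (Hk : 1 <= k <= n) q h (Hf : fibprod p k q h) :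
  exists x : cc Q k, dd Q k x = q /\ mm p k x = h.
Proof.
  destruct Hf as [Hq Hqh].
  destruct k as [|k]; [lia|].
  destruct k as [|k].
  - destruct (Hfib 1 Hk h) as [x Hx]. exists x. split; [|exact Hx].
    rewrite (cc0_triv Q q). apply cc0_triv.
  - cbn [pred] in *.
    assert (Hcq: cyc Q (S k) q).
    { destruct Hq as [Hq|Hq]; [left; lia | right; exact Hq]. }
    destruct (Hweq (S k) ltac:(lia)) as [_ Hinj].
    assert (Hb : bnd H (S k) (gmul (ginv (mm p (S k) gone)) (mm p (S k) q))).
    { left. split; [lia|]. exists h.
      rewrite (hom_one (mm_hom p (k:=(S k)) ltac:(lia))), inv_one, gone_l. symmetry; exact Hqh. }
    destruct (Hinj gone q (cyc_one Q (k:=S k) ltac:(lia)) Hcq Hb) as [[_ [z Hz]] | [Hc _]]; [|lia].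
    rewrite inv_one, gone_l in Hz.
    set (c := gmul (ginv (mm p (S (S k)) z)) h).
    assert (Hcc: cyc H (S (S k)) c).
    { right. unfold c.
      rewrite (hom_mul (dd_hom H (k:=(S (S k))) ltac:(lia))), (hom_inv (dd_hom H (k:=(S (S k))) ltac:(lia))).
      pose proof (mm_dd p (k:=(S (S k))) z ltac:(lia)) as E. cbn [pred] in E.
      rewrite <- E, Hz, Hqh. apply ginv_l. }
    destruct (Hweq (S (S k)) ltac:(lia)) as [Hsur _].
    destruct (Hsur c Hcc) as [y [Hy Hby]].
    assert (Hdy : dd Q (S (S k)) y = gone) by (destruct Hy; [lia|assumption]).
    destruct Hby as [[Hlt [w Hw]] | [Hge Hw]].
    + destruct (Hfib (S (S (S k))) ltac:(lia) w) as [w' Hw'].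
      exists (gmul z (gmul y (dd Q (S (S (S k))) w'))). split.
      * rewrite !(hom_mul (dd_hom Q (k:=(S (S k))) ltac:(lia))).
        pose proof (dd_dd Q (k:=(S (S (S k)))) w' ltac:(lia)) as E. cbn [pred] in E.
        rewrite Hz, Hdy, E, gone_l, mul1. reflexivity.
      * rewrite !(hom_mul (mm_hom p (k:=(S (S k))) ltac:(lia))).
        pose proof (mm_dd p (k:=(S (S (S k)))) w' ltac:(lia)) as E. cbn [pred] in E.
        rewrite E, Hw', Hw. unfold c. rewrite !mulKV. reflexivity.
    + exists (gmul z y). split.
      * rewrite (hom_mul (dd_hom Q (k:=(S (S k))) ltac:(lia))), Hz, Hdy, mul1. reflexivity.
      * rewrite (hom_mul (mm_hom p (k:=(S (S k))) ltac:(lia))).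
        apply inv_uniq in Hw. rewrite inv_inv in Hw. rewrite <- Hw. unfold c.
        apply mulKV.
Qed.

Lemma Kact_none n (Q H G : ncc n) (p : nmor Q H) (f : nmor Q G) a k :
  4 <= n -> Kact p f a k = k.
Proof. intro Hn. destruct n as [|[|[|[|m]]]]; try lia. reflexivity. Qed.

Lemma Kact_triv n (Q H G : ncc n) (p : nmor Q H) (f : nmor Q G) a k :
  3 <= n -> dd Q (pred n) a = gone -> Kact p f a k = k.
Proof.
  intros Hn Ha. destruct (Nat.eq_dec n 3) as [->|Hne].
  - unfold Kact. cbn. cbn [pred] in Ha. rewrite Ha.
    rewrite (hom_one (mm_hom p (k:=1) ltac:(lia))), (hom_one (mm_hom f (k:=1) ltac:(lia))).
    rewrite !act_one by lia. destruct k; reflexivity.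
  - apply Kact_none; lia.
Qed.

Lemma Kact_conj n (Q H G : ncc n) (p : nmor Q H) (f : nmor Q G) a k :
  3 <= n ->
  gmul (mm p (pred n) a) (dd H n (fst (Kact p f a k))) =
  gmul (dd H n (fst k)) (mm p (pred n) a).
Proof.
  intros Hn. destruct (Nat.eq_dec n 3) as [->|Hne].
  - unfold Kact. cbn.
    rewrite (dd_equiv H (k:=3)) by lia. cbn [pred].
    pose proof (mm_dd p (k:=2) a ltac:(lia)) as E. cbn [pred] in E. rewrite E.
    rewrite cm_peiffer by lia. apply mulKV.
  - rewrite Kact_none by lia. apply ab; lia.
Qed.

Theorem mainTheorem3 (n : nat) (Q H G : ncc n) (p : nmor Q H) (f : nmor Q G) :
  3 <= n -> trivfib p ->
  (* i is a homomorphism into P *)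
  (forall c c' : cc G n, Prel p f (Pmul p f (iP Q H G c) (iP Q H G c')) (iP Q H G (gmul c c'))) /\
  (* i is injective *)
  (forall c c' : cc G n, Prel p f (iP Q H G c) (iP Q H G c') -> c = c') /\
  (* u is well defined on P, lands in the fibre product, and is a homomorphism *)
  (forall z z' : Pelt Q H G, Prel p f z z' -> uP p z = uP p z') /\
  (forall z : Pelt Q H G, fibprod p (pred n) (fst (uP p z)) (snd (uP p z))) /\
  (forall z z' : Pelt Q H G,
     uP p (Pmul p f z z') =
     (gmul (fst (uP p z)) (fst (uP p z')), gmul (snd (uP p z)) (snd (uP p z')))) /\
  (* exactness at P: ker u = im i *)
  (forall z : Pelt Q H G, uP p z = (gone, gone) <-> exists c, Prel p f z (iP Q H G c)) /\
  (* u is surjective *)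
  (forall q h, fibprod p (pred n) q h -> exists z : Pelt Q H G, uP p z = (q, h)) /\
  (* u_k surjective for k <= n-2 *)
  (forall k, 1 <= k <= n - 2 -> forall q h, fibprod p k q h ->
     exists x : cc Q k, dd Q k x = q /\ mm p k x = h).
Proof.
  intros Hn [Hfib Hweq].
  assert (KN : forall x k, Kact p f (ginv (dd Q n x)) k = k).
  { intros x k. apply Kact_triv; [lia|].
    rewrite (hom_inv (dd_hom Q (k:=(pred n)) ltac:(lia))), (dd_dd Q (k:=n) x) by lia. apply inv_one. }
  assert (K1 : forall k, Kact p f gone k = k).
  { intro k; apply Kact_triv; [lia| apply (hom_one (dd_hom Q (k:=(pred n)) ltac:(lia)))]. }
  assert (Kc : forall x b, gmul (mm p (pred n) (dd Q n x)) (dd H n b)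
                           = gmul (dd H n b) (mm p (pred n) (dd Q n x))).
  { intros x b. pose proof (Kact_conj p f (dd Q n x) (b, gone) Hn) as E.
    rewrite Kact_triv in E by (first [lia | apply dd_dd; lia]). exact E. }
  assert (Hwd : forall z z' : Pelt Q H G, Prel p f z z' -> uP p z = uP p z').
  { intros z z' [x ->]. destruct z as [a [b c]].
    unfold uP, Pmul, Nelt; cbn [fst snd]. rewrite KN. cbn [fst snd]. f_equal.
    - rewrite (hom_mul (dd_hom Q (k:=(pred n)) ltac:(lia))), (hom_inv (dd_hom Q (k:=(pred n)) ltac:(lia))).
      rewrite (dd_dd Q (k:=n) x) by lia. rewrite inv_one, mul1. reflexivity.
    - rewrite (hom_mul (mm_hom p (k:=(pred n)) ltac:(lia))), (hom_inv (mm_hom p (k:=(pred n)) ltac:(lia))).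
      rewrite (hom_mul (dd_hom H (k:=n) ltac:(lia))), <- (mm_dd p (k:=n) x) by lia.
      rewrite <- Kc, <- gassoc, mulVK. reflexivity. }
  refine (conj _ (conj _ (conj Hwd (conj _ (conj _ (conj _ (conj _ _))))))).
  - intros c c'. exists gone. unfold Pmul, Nelt, iP; cbn [fst snd].
    rewrite K1. cbn [fst snd]. rewrite KN. cbn [fst snd].
    rewrite (hom_one (dd_hom Q (k:=n) ltac:(lia))), (hom_one (mm_hom p (k:=n) ltac:(lia))),
      (hom_one (mm_hom f (k:=n) ltac:(lia))), inv_one, !gone_l, !mul1. reflexivity.
  - intros c c' [x Hx]. unfold Pmul, Nelt, iP in Hx; cbn [fst snd] in Hx.
    rewrite KN in Hx. cbn [fst snd] in Hx.
    injection Hx as H1 H2 H3. rewrite gone_l in H1, H2.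
    assert (Hdx: dd Q n x = gone).
    { rewrite <- (inv_inv (dd Q n x)), <- H1. apply inv_one. }
    destruct (Hweq n ltac:(lia)) as [_ Hinj].
    assert (Hb : bnd H n (gmul (ginv (mm p n gone)) (mm p n x))).
    { right. split; [lia|]. rewrite <- H2, (hom_one (mm_hom p (k:=n) ltac:(lia))), inv_one, gone_l.
      reflexivity. }
    destruct (Hinj gone x (cyc_one Q (k:=n) ltac:(lia)) (or_intror Hdx) Hb) as [[Hlt _]|[_ Hx0]]; [lia|].
    rewrite inv_one, gone_l in Hx0. subst x.
    rewrite H3, (hom_one (mm_hom f (k:=n) ltac:(lia))), mul1. reflexivity.
  - intros [a [b c]]. unfold fibprod, uP; cbn [fst snd]. split.
    + destruct (le_lt_dec n 3) as [Hle|Hgt]; [left; lia | right; apply dd_dd; lia].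
    + rewrite (mm_dd p (k:=(pred n)) a) by lia.
      rewrite (hom_mul (dd_hom H (k:=(pred n)) ltac:(lia))), (dd_dd H (k:=n) b) by lia.
      rewrite mul1. reflexivity.
  - intros [a [b c]] [a' [b' c']]. unfold uP, Pmul; cbn [fst snd]. f_equal.
    + apply (hom_mul (dd_hom Q (k:=(pred n)) ltac:(lia))).
    + rewrite (hom_mul (mm_hom p (k:=(pred n)) ltac:(lia))), (hom_mul (dd_hom H (k:=n) ltac:(lia))).
      pose proof (Kact_conj p f a' (b, c) Hn) as E. cbn [fst] in E.
      rewrite <- !gassoc, (gassoc _ (mm p (pred n) a')), E, <- gassoc. reflexivity.
  - intros [a [b c]]. split.
    + intro Hu. unfold uP in Hu; cbn [fst snd] in Hu. injection Hu as Ha Hb.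
      destruct (lift Hfib Hweq (k := n) ltac:(lia) (q:=a) (h:=ginv b)) as [x [Hx1 Hx2]].
      { split. right; exact Ha.
        rewrite (hom_inv (dd_hom H (k:=n) ltac:(lia))). exact (inv_uniq_l _ _ Hb). }
      exists (gmul c (mm f n x)). exists x. unfold iP, Pmul, Nelt; cbn [fst snd].
      rewrite KN. cbn [fst snd]. rewrite Hx1, Hx2, !mulV. reflexivity.
    + intros [c' Hc']. rewrite (Hwd _ _ Hc'). unfold uP, iP; cbn [fst snd].
      rewrite (hom_one (dd_hom Q (k:=(pred n)) ltac:(lia))), (hom_one (mm_hom p (k:=(pred n)) ltac:(lia))),
        (hom_one (dd_hom H (k:=n) ltac:(lia))), gone_l. reflexivity.
  - intros q h Hf. destruct (lift Hfib Hweq (k := pred n) ltac:(lia) Hf) as [x [E1 E2]].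
    exists (x, (gone, gone)). unfold uP; cbn [fst snd].
    rewrite E1, E2, (hom_one (dd_hom H (k:=n) ltac:(lia))), mul1. reflexivity.
  - intros k Hk q h Hf. exact (lift Hfib Hweq (k := k) ltac:(lia) Hf).
Qed.
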